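(* Let $\mathbf{u}=(u_n)$ be an a-sequence. Then the torsion subgroup $t(s_\mathbf{u}(\mathbb{T}))$ of $s_\mathbf{u}(\mathbb{T})$ is dense in $s_\mathbf{u}(\mathbb{T})$ with respect to the restriction of the topology $\tau_\mathbf{u}$ to $s_\mathbf{u}(\mathbb{T})$.
   Context: An a-sequence is a strictly increasing sequence of integers $\mathbf{u}=(u_n)_{n\in\mathbb{N}}$ with $u_n\mid u_{n+1}$ for all $n$. $\mathbb{T}=\mathbb{R}/\mathbb{Z}$, $\|x\|$ is the distance from $x$ to the nearest integer, $d(x,y)=\|x-y\|$. $s_\mathbf{u}(\mathbb{T})=\{x\in\mathbb{T}: u_nx\to0\text{ in }\mathbb{T}\}$. $\tau_\mathbf{u}$ is the topology on $\mathbb{T}$ induced by the metric $\varrho_\mathbf{u}(x,y)=\sup_n\max\{d(x,y),d(u_nx,u_ny)\}$. *)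

(* Defs.v *)
(* the circle T = R/Z is represented by real numbers;
   all notions below are 1-periodic, hence well defined on T. *)
From Stdlib Require Import Reals ZArith.
Open Scope R_scope.

Definition normT (x : R) : R := Rmin (frac_part x) (1 - frac_part x).

Definition dT (x y : R) : R := normT (x - y).

Definition a_sequence (u : nat -> Z) : Prop :=
  forall n : nat, (u n < u (S n))%Z /\ Z.divide (u n) (u (S n)).

Definition s_u (u : nat -> Z) (x : R) : Prop :=
  Un_cv (fun n => normT (IZR (u n) * x)) 0.

Definition torsionT (x : R) : Prop :=
  exists (m : nat) (k : Z), (0 < m)%nat /\ INR m * x = IZR k.

(* rho_u(x,y) < eps, where
   rho_u(x,y) = sup_n max{ d(x,y), d(u_n x, u_n y) } *)
Definition rho_lt (u : nat -> Z) (x y eps : R) : Prop :=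
  exists r : R, r < eps /\
    forall n : nat, dT x y <= r /\ dT (IZR (u n) * x) (IZR (u n) * y) <= r.

(* A is dense in the subspace B of (T, tau_u):
   every rho_u-ball centered at a point of B meets A /\ B *)
Definition dense_in_tau (u : nat -> Z) (A B : R -> Prop) : Prop :=
  forall x : R, B x -> forall eps : R, 0 < eps ->
    exists y : R, A y /\ B y /\ rho_lt u x y eps.

(* Main.v *)
Require Import Defs.
From Stdlib Require Import Reals ZArith Lra Lia.
Open Scope R_scope.

Lemma normT_nonneg z : 0 <= normT z.
Proof. unfold normT. destruct (base_fp z). apply Rmin_glb; lra. Qed.

Lemma normT_min z j : normT z <= Rabs (z - IZR j).
Proof.
  unfold normT. destruct (base_fp z) as [H1 H2].
  unfold frac_part in *. set (I := Int_part z) in *.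
  destruct (Z_le_gt_dec j I) as [Hj|Hj].
  - apply IZR_le in Hj. apply Rle_trans with (z - IZR I); [apply Rmin_l|].
    apply Rle_trans with (z - IZR j); [lra| apply Rle_abs].
  - assert (Hj' : (I + 1 <= j)%Z) by lia. apply IZR_le in Hj'. rewrite plus_IZR in Hj'.
    apply Rle_trans with (1 - (z - IZR I)); [apply Rmin_r|].
    rewrite Rabs_minus_sym.
    apply Rle_trans with (IZR j - z); [lra| apply Rle_abs].
Qed.

Lemma normT_ex z : exists k, Rabs (z - IZR k) = normT z.
Proof.
  unfold normT. destruct (base_fp z) as [H1 H2].
  unfold frac_part in *. set (I := Int_part z) in *.
  destruct (Rle_dec (z - IZR I) (1 - (z - IZR I))) as [H|H].
  - exists I. rewrite Rmin_left by lra. apply Rabs_pos_eq; lra.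
  - exists (I+1)%Z. rewrite Rmin_right by lra. rewrite plus_IZR.
    rewrite Rabs_left1 by lra. ring.
Qed.

Lemma normT_shift z k : normT (z + IZR k) = normT z.
Proof.
  apply Rle_antisym.
  - destruct (normT_ex z) as [j Hj]. rewrite <- Hj.
    replace (z - IZR j) with (z + IZR k - IZR (j + k)) by (rewrite plus_IZR; ring).
    apply normT_min.
  - destruct (normT_ex (z + IZR k)) as [j Hj]. rewrite <- Hj.
    replace (z + IZR k - IZR j) with (z - IZR (j - k)) by (rewrite minus_IZR; ring).
    apply normT_min.
Qed.

Lemma normT_int j : normT (IZR j) = 0.
Proof.
  apply Rle_antisym; [|apply normT_nonneg].
  replace 0 with (Rabs (IZR j - IZR j)) by (rewrite Rminus_diag_eq; [apply Rabs_R0|reflexivity]).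
  apply normT_min.
Qed.

Lemma abs_le_mult c w : c <> 0%Z -> Rabs w <= Rabs (IZR c * w).
Proof.
  intro Hc. rewrite Rabs_mult, Rabs_Zabs.
  assert (1 <= IZR (Z.abs c)) by (apply IZR_le; lia).
  pose proof (Rabs_pos w). nra.
Qed.

Lemma aseq_div u : a_sequence u -> forall n m, (n <= m)%nat -> Z.divide (u n) (u m).
Proof.
  intros hu n m Hnm. induction Hnm.
  - apply Z.divide_refl.
  - eapply Z.divide_trans; [exact IHHnm| apply (hu m)].
Qed.

Lemma aseq_nz u : a_sequence u -> forall n, u n <> 0%Z.
Proof.
  intros hu n H. destruct (hu n) as [H1 H2]. rewrite H in H1, H2.
  apply Z.divide_0_l in H2. lia.
Qed.

Theorem propositionD (u : nat -> Z) (hu : a_sequence u) :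
  dense_in_tau u (fun x => torsionT x /\ s_u u x) (s_u u).
Proof.
  intros x Hx eps Heps.
  destruct (Hx (eps/2)) as [N HN]; [lra|].
  assert (Hb : forall n, (n >= N)%nat -> normT (IZR (u n) * x) < eps/2).
  { intros n Hn. specialize (HN n Hn). unfold R_dist in HN.
    rewrite Rminus_0_r in HN. eapply Rle_lt_trans; [apply Rle_abs|exact HN]. }
  set (M := u N).
  assert (HM : M <> 0%Z) by apply (aseq_nz u hu).
  assert (HMR : IZR M <> 0) by (apply not_0_IZR; exact HM).
  destruct (normT_ex (IZR M * x)) as [k Hk].
  assert (Hd : Rabs (IZR M * x - IZR k) < eps/2) by (rewrite Hk; apply Hb; lia).
  set (y := IZR k / IZR M).
  assert (Hyint : forall n, (n >= N)%nat -> exists j, IZR (u n) * y = IZR j).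
  { intros n Hn. destruct (aseq_div u hu N n Hn) as [c Hc].
    exists (c * k)%Z. unfold y. rewrite Hc, !mult_IZR. fold M. field. exact HMR. }
  assert (Hdelta : IZR M * x - IZR k = IZR M * (x - y)) by (unfold y; field; exact HMR).
  assert (Hsy : s_u u y).
  { intros e He. exists N. intros n Hn. destruct (Hyint n Hn) as [j Hj].
    unfold R_dist. rewrite Hj, normT_int, Rminus_0_r, Rabs_R0. exact He. }
  exists y. split; [split|split].
  - destruct (Z.abs_spec M) as [[_ E]|[_ E]].
    + exists (Z.to_nat M), k. split; [lia|].
      rewrite INR_IZR_INZ, Z2Nat.id by lia. unfold y. field. exact HMR.
    + exists (Z.to_nat (- M)), (- k)%Z. split; [lia|].
      rewrite INR_IZR_INZ, Z2Nat.id by lia. unfold y. rewrite !opp_IZR. field. exact HMR.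
  - exact Hsy.
  - exact Hsy.
  - exists (eps/2). split; [lra|]. intro n. split.
    + unfold dT. apply Rle_trans with (Rabs (x - y - IZR 0)); [apply normT_min|].
      rewrite Rminus_0_r. apply Rle_trans with (Rabs (IZR M * (x - y))).
      * apply abs_le_mult; exact HM.
      * rewrite <- Hdelta. lra.
    + unfold dT. destruct (le_ge_dec n N) as [Hn|Hn].
      * destruct (aseq_div u hu n N Hn) as [c Hc].
        assert (Hc0 : c <> 0%Z) by (intro; subst; fold M in Hc; lia).
        apply Rle_trans with (Rabs (IZR (u n) * x - IZR (u n) * y - IZR 0)); [apply normT_min|].
        rewrite Rminus_0_r. apply Rle_trans with (Rabs (IZR c * (IZR (u n) * x - IZR (u n) * y))).
        -- apply abs_le_mult; exact Hc0.
        -- replace (IZR c * (IZR (u n) * x - IZR (u n) * y)) with (IZR M * (x - y)).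
           ++ rewrite <- Hdelta. lra.
           ++ fold M in Hc. rewrite Hc, mult_IZR. ring.
      * destruct (Hyint n Hn) as [j Hj]. rewrite Hj.
        replace (IZR (u n) * x - IZR j) with (IZR (u n) * x + IZR (- j)) by (rewrite opp_IZR; ring).
        rewrite normT_shift. left. apply Hb. exact Hn.
Qed.
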